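(* Let $q\in(0,1]$. Then $\omega(R(SU_q(2)))=q^{-2}$.
   Context: $R(SU_q(2))$ is the fusion algebra with irreducible objects $I=\mathbb{Z}_+$, unit $0$, trivial involution, product $m\cdot n=\sum_{k\in\{|m-n|,|m-n|+2,\dots,m+n\}}k$, and dimension $d(n)=[n+1]_q$, where $[x]_q=\frac{q^{-x}-q^x}{q^{-1}-q}$ for $0<q<1$ and $[x]_1=x$. For $A\subseteq I$, $|A|=\sum_{\beta\in A}d(\beta)^2$. A finite generating set is a finite $X\subseteq I$ such that every $\beta\in I$ appears with nonzero coefficient in some product $x_1\cdots x_n$, $x_i\in X$; $\ell_X(0)=0$ and otherwise $\ell_X(\beta)$ is the least such $n\ge1$; $B_X(n)=\{\beta:\ell_X(\beta)\le n\}$. $\omega_X=\lim_{n\to\infty}|B_X(n)|^{1/n}$ (the limit exists) and $\omega(R(SU_q(2)))=\inf_X\omega_X$ over finite generating sets. *)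

(* Defs.v *)
From HB Require Import structures.
From mathcomp Require Import all_boot all_order all_algebra.
From mathcomp Require Import all_classical all_reals all_analysis.
Set Implicit Arguments. Unset Strict Implicit. Unset Printing Implicit Defensive.
Import Order.TTheory GRing.Theory Num.Theory.
Local Open Scope classical_set_scope.
Local Open Scope ring_scope.

(* Fusion rule of R(SU_q(2)): coefficient of k in m*n (0 or 1):
   k in {|m-n|, |m-n|+2, ..., m+n}. *)
Definition fus (m n k : nat) : nat :=
  [&& (m - n <= k)%N, (n - m <= k)%N, (k <= m + n)%N & ~~ odd (m + n + k)].

(* Coefficient of the irreducible k in the product x_1 * ... * x_n of the
   list s = [:: x_1; ...; x_n]  (empty product = unit object 0). *)
Fixpoint prodcoef (s : seq nat) (k : nat) : nat :=
  match s with
  | [::] => (k == 0)%N : nat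
  | x :: s' => (\sum_(j < (sumn s').+1) prodcoef s' j * fus x j k)%N
  end.

Definition qint {R : realType} (q : R) (x : nat) : R :=
  if q == 1 then x%:R else (q ^- x - q ^+ x) / (q^-1 - q).
Definition qdim {R : realType} (q : R) (n : nat) : R := qint q n.+1.

Definition generating (X : seq nat) : Prop :=
  forall b : nat, exists s : seq nat,
    [/\ (0 < size s)%N, all (mem X) s & (0 < prodcoef s b)%N].

(* Ball B_X(n) = {b : l_X(b) <= n}, with l_X(0) = 0. *)
Definition ball (X : seq nat) (n : nat) : set nat :=
  [set b | b = 0%N \/ exists s : seq nat,
    [/\ (0 < size s)%N, (size s <= n)%N, all (mem X) s & (0 < prodcoef s b)%N]].

Definition fsize {R : realType} (q : R) (A : set nat) : R :=
  \sum_(b \in A) qdim q b ^+ 2.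

Definition omegaX {R : realType} (q : R) (X : seq nat) : R :=
  limn (fun n : nat => fsize q (ball X n) `^ (n%:R^-1)).

Definition omega {R : realType} (q : R) : R :=
  inf [set omegaX q X | X in generating].

(* Main.v *)
Require Import Defs.
From mathcomp Require Import all_boot all_order all_algebra.
From mathcomp Require Import all_classical all_reals all_analysis.
From mathcomp Require Import lra ring.
Import Order.TTheory GRing.Theory Num.Theory.
Lemma prodcoef_big s k : (sumn s < k)%N -> prodcoef s k = 0%N.
Proof.
elim: s k => [|x s IH] k /= hk; first by case: k hk.
apply: big1 => j _.
have hj : (j <= sumn s)%N by rewrite -ltnS.
rewrite /fus.
have -> : (k <= x + j)%N = false by apply/negbTE; rewrite -ltnNge; apply: leq_ltn_trans hk; rewrite leq_add2l.
by rewrite !andbF muln0.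
Qed.

Lemma prodcoef_sumn s : (0 < prodcoef s (sumn s))%N.
Proof.
elim: s => [|x s IH] //=.
rewrite big_ord_recr /=.
have -> : fus x (sumn s) (x + sumn s) = 1%N.
  rewrite /fus leqnn addnn odd_double.
  have -> : (x - sumn s <= x + sumn s)%N by apply: leq_trans (leq_subr _ _) (leq_addr _ _).
  have -> : (sumn s - x <= x + sumn s)%N by apply: leq_trans (leq_subr _ _) (leq_addl _ _).
  by [].
by rewrite muln1 ltn_addl.
Qed.

Definition mx (X : seq nat) : nat := foldr maxn 0%N X.

Lemma mx_ge (X : seq nat) (x : nat) : x \in X -> (x <= mx X)%N.
Proof.
elim: X => [|y X IH] //=; rewrite in_cons => /orP[/eqP->|h].
  by rewrite leq_maxl.
by rewrite (leq_trans (IH h)) ?leq_maxr.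
Qed.

Lemma mx_in (X : seq nat) : X != [::] -> mx X \in X.
Proof.
elim: X => [|y X IH] //= _; rewrite in_cons.
case: X IH => [|z X] IH /=; first by rewrite maxn0 eqxx.
have := IH isT; rewrite /maxn; case: ifP => _ h; first by rewrite h orbT.
by rewrite eqxx.
Qed.

Lemma sumn_le (X s : seq nat) : all (mem X) s -> (sumn s <= size s * mx X)%N.
Proof.
elim: s => [|x s IH] //= /andP[hx hs].
by rewrite mulSn leq_add // ?mx_ge // IH.
Qed.

Lemma ball_le (X : seq nat) (n b : nat) : Defs.ball X n b -> (b <= n * mx X)%N.
Proof.
case=> [->//|[s [h0 hn ha hp]]].
case: (leqP b (sumn s)) => hb; last by rewrite prodcoef_big in hp.
by rewrite (leq_trans hb) // (leq_trans (sumn_le _ _ ha)) // leq_mul2r hn orbT.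
Qed.

Lemma ball_top (X : seq nat) (n : nat) : X != [::] -> (0 < n)%N -> Defs.ball X n (n * mx X)%N.
Proof.
move=> hX hn; right; exists (nseq n (mx X)); split.
- by rewrite size_nseq.
- by rewrite size_nseq.
- by rewrite all_nseq; have := mx_in _ hX; case: n hn => // n _ h; apply/orP; right.
- by have := prodcoef_sumn (nseq n (mx X)); rewrite sumn_nseq mulnC.
Qed.

Lemma ball0 (X : seq nat) (n : nat) : Defs.ball X n 0%N.
Proof. by left. Qed.

Lemma gen_mx (X : seq nat) : generating X -> X != [::] /\ (1 <= mx X)%N.
Proof.
move=> /(_ 1%N) [s [h0 ha hp]].
case: (leqP 1 (sumn s)) => hb; last by rewrite prodcoef_big in hp.
have h := leq_trans hb (sumn_le _ _ ha).
split; first by case: X ha h {hb} => //; case: s h0 {hp} => //= x s _ /andP[].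
by case: (mx X) h => //; rewrite muln0.
Qed.

Lemma gen1 : generating [:: 1%N].
Proof.
case=> [|b].
  exists [:: 1%N; 1%N]; split => //.
  by rewrite /= !big_ord_recr !big_ord0 /=.
exists (nseq b.+1 1%N); split => //.
- by rewrite all_nseq /= inE.
- by have := prodcoef_sumn (nseq b.+1 1%N); rewrite sumn_nseq mul1n.
Qed.
Local Open Scope ring_scope.
Lemma qdim_bounds (R : realType) (q : R) (k : nat) : 0 < q -> q <= 1 ->
  q^-1 ^+ k <= qdim q k <= k.+1%:R * q^-1 ^+ k.
Proof.
move=> hq0 hq1; rewrite /qdim /qint.
have r1 : 1 <= q^-1 by rewrite invf_ge1.
case: eqP => [->|/eqP hq]; first by rewrite invr1 expr1n mulr1 ler1n lexx.
have hlt : q < 1 by rewrite lt_neqAle hq.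
have hne : q^-1 - q != 0.
  by rewrite subr_eq0 gt_eqF // (lt_le_trans hlt r1).
rewrite -exprVn subrXX mulrC mulKf //=.
apply/andP; split.
  rewrite big_ord_recl /= subn0 expr0 mulr1 lerDl.
  by apply: sumr_ge0 => i _; rewrite mulr_ge0 // exprn_ge0 // ltW // invr_gt0.
have -> : k.+1%:R * q^-1 ^+ k = \sum_(i < k.+1) q^-1 ^+ k by rewrite sumr_const card_ord mulr_natl.
apply: ler_sum => i _.
rewrite -[X in _ <= X]mulr1 ler_pM //.
- by rewrite exprn_ge0 // ltW // invr_gt0.
- by rewrite exprn_ge0 // ltW.
- by rewrite ler_weXn2l // leq_subr.
- by rewrite exprn_ile1 // ltW.
Qed.
Local Open Scope classical_set_scope.
Import numFieldNormedType.Exports.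
Local Open Scope ring_scope.
Lemma root_cvg1 (R : realType) (M : nat) :
  ((n * M).+1%:R : R) `^ (n%:R^-1) @[n --> \oo] --> (1 : R).
Proof.
apply/cvgrPdist_le => e e0.
set d := ln (1 + e).
have d0 : 0 < d by rewrite ln_gt0 // ltrDl.
have ed : expR d = 1 + e by rewrite lnK // posrE ltr_wpDr // ltW.
near=> n.
have n1 : (1 <= n)%N by near: n; exact: nbhs_infty_ge.
have hn : (M%:R * 2) / d ^+ 2 <= n%:R :> R by near: n; exact: nbhs_infty_ger.
have y1 : 1 <= ((n * M).+1%:R : R) by rewrite ler1n.
have p0 : 0 <= (n%:R : R)^-1 by rewrite invr_ge0.
have lb : 1 <= ((n * M).+1%:R : R) `^ (n%:R^-1).
  by have := ler_powR y1 p0; rewrite powRr0.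
have ub : ((n * M).+1%:R : R) `^ (n%:R^-1) <= 1 + e.
  have nz : (n%:R : R) != 0 by rewrite pnatr_eq0 -lt0n.
  have -> : 1 + e = ((1 + e) ^+ n) `^ (n%:R^-1).
    rewrite -powR_mulrn; last by rewrite addr_ge0 // ltW.
    by rewrite -powRrM mulfV // powRr1 // addr_ge0 // ltW.
  have e0' : (0 : R) <= 1 + e by rewrite addr_ge0 // ltW.
  apply: ge0_ler_powR => //; rewrite ?nnegrE ?exprn_ge0 //.
  rewrite -ed -expRM_natl.
  apply: le_trans (@expR_ge1Dxn R (n%:R * d) 1 _); last by rewrite mulr_ge0 // ltW.
  rewrite -addn1 natrD addrC lerD2l natrM.
  have -> : (2`!%:R : R) = 2 by [].
  move: hn; rewrite ler_pdivrMr ?exprn_gt0 // => hn.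
  have n0 : (0 : R) <= n%:R by [].
  rewrite ler_pdivlMr //.
  have := ler_wpM2l n0 hn.
  rewrite exprMn; nra.
rewrite distrC ger0_norm ?subr_ge0 // lerBlDl.
exact: ub.
Unshelve. all: end_near.
Qed.
Lemma fsize_bounds (R : realType) (q : R) (A : set nat) (N : nat) :
  0 < q -> q <= 1 -> (forall b, A b -> (b <= N)%N) -> A N ->
  (q^-1 ^+ N) ^+ 2 <= fsize q A <= (N.+1%:R) ^+ 3 * (q^-1 ^+ N) ^+ 2.
Proof.
move=> hq0 hq1 hle hN.
set F := fun b : nat => qdim q b ^+ 2.
set G := fun b : nat => if `[< A b >] then F b else 0.
have G0 b : 0 <= G b.
  by rewrite /G; case: ifP => // _; rewrite /F sqr_ge0.
have e1 : fsize q A = \sum_(b < N.+1) G b.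
  rewrite /fsize (eq_fsbigr G); last first.
    by move=> b; rewrite inE => Ab; rewrite /G asboolT.
  rewrite (fsbig_widen A `I_N.+1 G).
  - by rewrite -fsbig_ord.
  - by move=> b /hle; rewrite /= ltnS.
  - by move=> b [_ nA]; rewrite /= /G asboolF.
have r0 : 0 <= q^-1 by rewrite invr_ge0 ltW.
have Fb b : (b <= N)%N -> (q^-1 ^+ b) ^+ 2 <= F b <= (N.+1%:R * q^-1 ^+ N) ^+ 2.
  move=> hb; have /andP[l u] := qdim_bounds _ q b hq0 hq1.
  have d0 : 0 <= qdim q b by apply: le_trans l; rewrite exprn_ge0.
  rewrite /F; apply/andP; split.
    by apply: lerXn2r => //; rewrite nnegrE exprn_ge0.
  apply: lerXn2r; rewrite ?nnegrE ?mulr_ge0 ?exprn_ge0 //.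
  apply: le_trans u _; apply: ler_pM; rewrite ?exprn_ge0 //.
    by rewrite ler_nat ltnS.
  by apply: ler_weXn2l => //; rewrite invf_ge1.
rewrite e1; apply/andP; split.
  rewrite big_ord_recr /=; have -> : G N = F N by rewrite /G asboolT.
  apply: ler_wpDl; first by apply: sumr_ge0 => i _; exact: G0.
  by have /andP[] := Fb N (leqnn N).
have -> : (N.+1%:R) ^+ 3 * (q^-1 ^+ N) ^+ 2 = \sum_(b < N.+1) (N.+1%:R * q^-1 ^+ N) ^+ 2.
  rewrite sumr_const card_ord -mulr_natr; ring.
apply: ler_sum => b _; rewrite /G; case: ifP => _.
  by have /andP[] := Fb b (ltn_ord b).
by rewrite sqr_ge0.
Qed.
Lemma powR_pow_inv (R : realType) (r : R) (n M : nat) : 0 <= r -> (0 < n)%N ->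
  ((r ^+ (n * M)) ^+ 2) `^ (n%:R^-1) = r ^+ (2 * M).
Proof.
move=> r0 n0.
have nz : (n%:R : R) != 0 by rewrite pnatr_eq0 -lt0n.
rewrite -exprM -powR_mulrn // -powRrM -powR_mulrn //; congr (_ `^ _).
rewrite !natrM; field => //.
Qed.

Lemma powR_cube (R : realType) (y p : R) : 0 <= y ->
  (y ^+ 3) `^ p = (y `^ p) ^+ 3.
Proof.
move=> y0; rewrite -powR_mulrn // -powRrM mulrC powRrM powR_mulrn //.
exact: powR_ge0.
Qed.

Lemma omegaX_gen (R : realType) (q : R) (X : seq nat) : 0 < q -> q <= 1 ->
  generating X -> omegaX q X = q^-1 ^+ (2 * mx X).
Proof.
move=> hq0 hq1 hgen.
have [hX M1] := gen_mx X hgen.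
set M := mx X; set L := q^-1 ^+ (2 * M).
have r0 : 0 <= q^-1 by rewrite invr_ge0 ltW.
set g := fun n : nat => ((n * M).+1%:R : R) `^ (n%:R^-1).
have g3 : (fun n => g n ^+ 3 * L) @ \oo --> L.
  have h1 : (g \* (g \* g)) @ \oo --> (1:R) * (1 * 1).
    by apply: cvgM; [|apply: cvgM]; exact: root_cvg1.
  rewrite !mul1r in h1.
  have := cvgMr_tmp (b := L) h1; rewrite mul1r.
  have -> : (fun n => g n ^+ 3 * L) = (fun x => (g \* (g \* g)) x * L).
    by apply/funext=> n /=; rewrite !exprS expr0 mulr1.
  by apply.
apply: cvg_lim => //.
apply: (squeeze_cvgr _ (cvg_cst L) g3).
near=> n.
have n1 : (0 < n)%N by near: n; exact: nbhs_infty_gt.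
have /andP[lo up] := @fsize_bounds R q (Defs.ball X n) (n * M) hq0 hq1
  (fun b hb => ball_le X n b hb) (ball_top X n hX n1).
have p0 : (0 : R) <= n%:R^-1 by rewrite invr_ge0.
apply/andP; split.
  rewrite /L -(powR_pow_inv _ _ _ M r0 n1).
  apply: (ge0_ler_powR p0) => //.
  - by rewrite nnegrE !exprn_ge0.
  - by rewrite nnegrE (le_trans _ lo) // !exprn_ge0.
apply: le_trans (ge0_ler_powR p0 _ _ up) _.
- by rewrite nnegrE (le_trans _ lo) // exprn_ge0 // exprn_ge0.
- by rewrite nnegrE mulr_ge0 // exprn_ge0 // exprn_ge0.
rewrite powRM ?exprn_ge0 // powR_cube // powR_pow_inv //.
Unshelve. all: end_near.
Qed.
Theorem proposition4p5 (R : realType) (q : R) (hq0 : 0 < q) (hq1 : q <= 1) :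
  omega q = q ^- 2.
Proof.
have r1 : 1 <= q^-1 by rewrite invf_ge1.
have mem1 : [set omegaX q X | X in generating] (q ^- 2).
  exists [:: 1%N]; first exact: gen1.
  by rewrite (omegaX_gen _ q _ hq0 hq1 gen1) exprVn.
have lb : lbound [set omegaX q X | X in generating] (q ^- 2).
  move=> _ [X hX <-]; rewrite (omegaX_gen _ q _ hq0 hq1 hX) -exprVn.
  apply: ler_weXn2l => //.
  by have [_ h] := gen_mx X hX; rewrite -[2%N]muln1 leq_mul2l.
rewrite /omega; apply/eqP; rewrite eq_le; apply/andP; split.
  by apply: ge_inf => //; exists (q ^- 2).
by apply: lb_le_inf => //; exists (q ^- 2).
Qed.
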